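(* Let $T$ be a diametrical tree with diametral path $D = v_0 v_1 \cdots v_d$ and endpoints $e_1=v_0$, $e_2=v_d$. If a limb of type (A) or of type (B) is located at $v_i$, then $i \geq 2$ and $d-i \geq 2$; if a limb of type (C) is located at $v_i$, then $i \geq 1$ and $d - i \geq 1$.
   Context: Let $G=(V,E)$ be a finite connected graph with distance $d(u,v)$, eccentricity $e(v)=\max_w d(v,w)$ and diameter $\mathrm{diam}(G)=\max_v e(v)$. A broadcast is a function $f: V\to\{0,\dots,\mathrm{diam}(G)\}$ with $f(v)\le e(v)$; its cost is $\sum_v f(v)$; it is dominating if every $u$ has some $v$ with $f(v)\ge 1$ and $d(u,v)\le f(v)$; a dominating broadcast is minimal if decreasing $f(v)$ for any $v$ with $f(v)>0$ destroys domination. $\Gamma_b(G)$ is the maximum cost of a minimal dominating broadcast, and $G$ is called diametrical if $\Gamma_b(G)=\mathrm{diam}(G)$. For a tree $T$ with a fixed diametral path $D=v_0\cdots v_d$, a vertex $u\notin D$ protrudes from $v_i$ if $v_i$ is the vertex of $D$ closest to $u$; the limb at $v_i$ (when nonempty) is the subtree induced by $v_i$ and the vertices protruding from $v_i$. It is of type (A) if it is a path $v_i x y$ of length 2 (exactly two protruding vertices); of type (B) if it consists of exactly two leaves adjacent to $v_i$; of type (C) if it consists of exactly one leaf adjacent to $v_i$. *)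

(* Defs.v *)
From mathcomp Require Import all_boot.
Set Implicit Arguments. Unset Strict Implicit. Unset Printing Implicit Defensive.

Section Graphs.
Variable T : finType.
Variable e : rel T.

Definition simple_graph : Prop := irreflexive e /\ symmetric e.
Definition connected : Prop := forall u v : T, connect e u v.
Definition has_cycle : Prop := exists c : seq T, [/\ 3 <= size c, uniq c & cycle e c].
Definition is_tree : Prop := [/\ simple_graph, connected & ~ has_cycle].

Fixpoint reachk (k : nat) (u v : T) : bool :=
  if k is k'.+1 then (u == v) || [exists w, e u w && reachk k' w v] else u == v.

(* graph distance (correct for connected graphs: distances are < #|T|) *)
Definition dist (u v : T) : nat := find (fun k => reachk k u v) (iota 0 #|T|).

Definition ecc (v : T) : nat := \max_(w : T) dist v w.
Definition diam : nat := \max_(v : T) ecc v.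

Definition broadcast (f : T -> nat) : bool := [forall v, (f v <= diam) && (f v <= ecc v)].
Definition dominating (f : T -> nat) : bool :=
  [forall u, [exists v, (1 <= f v) && (dist u v <= f v)]].
Definition minimal_dominating (f : T -> nat) : bool :=
  [&& broadcast f, dominating f &
  [forall v, (0 < f v) ==> [forall k : 'I_(f v),
    ~~ dominating (fun w => if w == v then nat_of_ord k else f w)]]].
Definition cost (f : T -> nat) : nat := \sum_(v : T) f v.

Definition Gamma_b : nat :=
  \max_(f : {ffun T -> 'I_diam.+1} |
          minimal_dominating (fun v => nat_of_ord (f v)))
     cost (fun v => nat_of_ord (f v)).
Definition diametrical : Prop := Gamma_b = diam.

Definition diametral_path (d : nat) (D : nat -> T) : Prop :=
  [/\ d = diam, dist (D 0) (D d) = d & forall i, i < d -> e (D i) (D i.+1)].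

Definition on_path (d : nat) (D : nat -> T) (u : T) : Prop := exists2 j, j <= d & u = D j.

Definition protrudes (d : nat) (D : nat -> T) (u : T) (i : nat) : Prop :=
  [/\ i <= d, ~ on_path d D u &
      forall j, j <= d -> j != i -> dist u (D i) < dist u (D j)].

(* limb types at v_i (limb = v_i together with the vertices protruding from v_i) *)
Definition limbA (d : nat) (D : nat -> T) (i : nat) : Prop :=
  exists x y : T, [/\ x != y, e (D i) x, e x y & ~~ e (D i) y] /\
    forall u, protrudes d D u i <-> (u = x \/ u = y).
Definition limbB (d : nat) (D : nat -> T) (i : nat) : Prop :=
  exists x y : T, [/\ x != y, e (D i) x & e (D i) y] /\
    forall u, protrudes d D u i <-> (u = x \/ u = y).
Definition limbC (d : nat) (D : nat -> T) (i : nat) : Prop :=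
  exists x : T, e (D i) x /\ forall u, protrudes d D u i <-> u = x.

End Graphs.

(* Main.v *)
Require Import Defs.
From mathcomp Require Import all_boot.
From mathcomp Require Import zify.
From Stdlib Require Import FunctionalExtensionality.
Set Implicit Arguments. Unset Strict Implicit.


Lemma reach_mono (T : finType) (e : rel T) k u v :
  reachk e k u v -> reachk e k.+1 u v.
Proof.
elim: k u => [|k IH] u /=.
  by move=> ->.
case/orP=> [->//|/existsP[w /andP[uw wv]]].
apply/orP; right; apply/existsP; exists w; rewrite uw /=; exact: IH.
Qed.

Lemma reach_le (T : finType) (e : rel T) k m u v :
  k <= m -> reachk e k u v -> reachk e m u v.
Proof.
move=> /subnK <-; elim: (m - k) => [//|n IH] H.
rewrite addSn; apply: reach_mono; exact: IH.
Qed.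

Lemma reach_refl (T : finType) (e : rel T) k u : reachk e k u u.
Proof. by case: k => [|k] /=; rewrite eqxx. Qed.

Lemma reach_trans (T : finType) (e : rel T) a b u w v :
  reachk e a u w -> reachk e b w v -> reachk e (a + b) u v.
Proof.
elim: a u => [|a IH] u.
  by move=> /= /eqP ->.
move=> H1 H.
have {H1}: (u == w) || [exists x, e u x && reachk e a x w] by [].
case/orP=> [/eqP->|/existsP[x /andP[ux xw]]].
  move: H; apply: reach_le; lia.
rewrite addSn /=; apply/orP; right; apply/existsP; exists x.
rewrite ux /=; exact: IH.
Qed.

Lemma reach_edge (T : finType) (e : rel T) u w : e u w -> reachk e 1 u w.
Proof. move=> H /=; apply/orP; right; apply/existsP; exists w; by rewrite H eqxx. Qed.

Lemma reach_sym (T : finType) (e : rel T) : symmetric e ->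
  forall k u v, reachk e k u v -> reachk e k v u.
Proof.
move=> sym; elim=> [|k IH] u v /=.
  by rewrite eq_sym.
case/orP=> [/eqP->|/existsP[w /andP[uw wv]]].
  by rewrite eqxx.
have := reach_trans (IH _ _ wv) (reach_edge (e:=e) (u:=w) (w:=u) _).
rewrite sym uw addn1; exact.
Qed.

Lemma reach_walk (T : finType) (e : rel T) x p :
  path e x p -> reachk e (size p) x (last x p).
Proof.
elim: p x => [|y p IH] x /=.
  by rewrite eqxx.
case/andP=> xy H; apply/orP; right; apply/existsP; exists y; rewrite xy; exact: IH.
Qed.

Lemma reach_small (T : finType) (e : rel T) : connected e ->
  forall u v, exists2 k, k < #|T| & reachk e k u v.
Proof.
move=> con u v; have /connectP[p pp ->] := con u v.
case: (shortenP pp) => p' pp' up' _.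
exists (size p'); last exact: reach_walk.
have := max_card (mem (u :: p')); rewrite (card_uniqP up') /=; lia.
Qed.

Lemma dist_has (T : finType) (e : rel T) : connected e ->
  forall u v, has (fun k => reachk e k u v) (iota 0 #|T|).
Proof.
move=> con u v; have [k kl kr] := reach_small con u v.
apply/hasP; exists k => //; by rewrite mem_iota.
Qed.

Lemma dist_reach (T : finType) (e : rel T) : connected e ->
  forall u v, reachk e (dist e u v) u v.
Proof.
move=> con u v; have := nth_find 0 (dist_has con u v).
rewrite nth_iota ?add0n //.
have := dist_has con u v; rewrite has_find size_iota; exact.
Qed.

Lemma dist_min (T : finType) (e : rel T) : connected e ->
  forall k u v, reachk e k u v -> dist e u v <= k.
Proof.
move=> con k u v H; rewrite leqNgt; apply/negP => Hk.
have Hs : dist e u v <= #|T|.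
  rewrite /dist. have := find_size (fun k => reachk e k u v) (iota 0 #|T|).
  by rewrite size_iota.
have := before_find 0 Hk. rewrite nth_iota; last lia. by rewrite add0n H.
Qed.

Lemma dist_sym (T : finType) (e : rel T) : simple_graph e -> connected e ->
  forall u v, dist e u v = dist e v u.
Proof.
move=> [irr sym] con u v; apply/eqP; rewrite eqn_leq.
by rewrite !(dist_min con) // (reach_sym sym) // dist_reach.
Qed.

Lemma dist_tri (T : finType) (e : rel T) : connected e ->
  forall u w v, dist e u v <= dist e u w + dist e w v.
Proof.
move=> con u w v; apply: dist_min => //; apply: reach_trans; exact: dist_reach.
Qed.

Lemma dist_edge (T : finType) (e : rel T) : connected e ->
  forall u w, e u w -> dist e u w <= 1.
Proof. move=> con u w H; apply: dist_min => //; exact: reach_edge. Qed.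

Lemma dist_refl (T : finType) (e : rel T) : connected e ->
  forall u, dist e u u = 0.
Proof. move=> con u; apply/eqP; rewrite -leqn0; apply: dist_min => //=. Qed.

Lemma dist0 (T : finType) (e : rel T) : connected e ->
  forall u v, dist e u v = 0 -> u = v.
Proof. move=> con u v H; have := dist_reach con u v; rewrite H /=; by move/eqP. Qed.

Lemma dist1 (T : finType) (e : rel T) : connected e ->
  forall u v, dist e u v <= 1 -> u = v \/ e u v.
Proof.
move=> con u v H; have := reach_le H (dist_reach con u v).
rewrite /= => /orP[/eqP->|/existsP[w /andP[uw /eqP wv]]]; first by left.
by right; rewrite -wv.
Qed.

Lemma dist_parent (T : finType) (e : rel T) : simple_graph e -> connected e ->
  forall r u k, dist e r u = k.+1 -> exists p, e u p /\ dist e r p = k.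
Proof.
move=> sg con r u k H.
have := dist_reach con u r; rewrite (dist_sym sg con) in H; rewrite H /=.
case/orP=> [/eqP E|/existsP[w /andP[uw wr]]].
  by move: H; rewrite E dist_refl.
exists w; split=> //.
have h1 := dist_min con wr.
have h2 := dist_tri con u w r. have h3 := dist_edge con uw.
rewrite (dist_sym sg con); lia.
Qed.

Lemma dist_le_diam (T : finType) (e : rel T) u v : dist e u v <= diam e.
Proof.
apply: leq_trans (leq_bigmax (F := fun x => dist e u x) v) _.
exact: (leq_bigmax (F := ecc e) u).
Qed.


Lemma two_routes (T : finType) (e : rel T) : simple_graph e -> connected e ->
  forall k r x y, x != y -> dist e r x = k -> dist e r y = k ->
  exists q, [/\ path e x q, last x q = y, uniq (x :: q), 3 <= size (x :: q) &
     all (fun z => dist e r z <= k) (x :: q)].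
Proof.
move=> sg con; have [irr sym] := sg.
elim=> [|k IH] r x y xy dx dy.
  move: dx dy; rewrite (dist_sym sg con r x) (dist_sym sg con r y) => /(dist0 con) <- /(dist0 con) E.
  by rewrite E eqxx in xy.
have [px [xpx dpx]] := dist_parent sg con dx.
have [py [ypy dpy]] := dist_parent sg con dy.
have notin : forall z s, dist e r z = k.+1 -> all (fun z => dist e r z <= k) s -> z \notin s.
  move=> z s dz /allP A; apply/negP => /A /=; rewrite dz; lia.
case: (eqVneq px py) => [E|NE].
  exists [:: px; y]; split => //=.
  - by rewrite xpx E sym ypy.
  - rewrite !inE negb_or xy andbT /= andbT; apply/andP; split.
      by apply/negP => /eqP E'; move: dpx; rewrite -E' dx; lia.
    by apply/negP => /eqP E'; move: dpx; rewrite E' dy; lia.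
  - by rewrite dx dy dpx !leqnn /=; lia.
have [q0 [p0 l0 u0 s0 a0]] := IH r px py NE dpx dpy.
exists (rcons (px :: q0) y); split.
- rewrite /= xpx /= rcons_path p0 l0 sym ypy //.
- by rewrite last_rcons.
- have n1 := notin y _ dy a0.
  have nx : x \notin rcons (px :: q0) y.
    rewrite mem_rcons inE negb_or xy /=. exact: notin x _ dx a0.
  by rewrite cons_uniq nx rcons_uniq n1 u0.
- by rewrite /= size_rcons.
- rewrite /= dx leqnn /= all_rcons dy leqnn /=.
  move: a0 => /= /andP[h1 h2]; rewrite (leq_trans h1) //=.
  apply/allP => z zin; have := allP h2 z zin; lia.
Qed.

Lemma bipartite (T : finType) (e : rel T) : is_tree e ->
  forall r a b, e a b -> dist e r a = dist e r b -> False.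
Proof.
move=> [sg con nc] r a b ab dab; have [irr sym] := sg.
have ab' : a != b by apply/negP => /eqP E; move: ab; rewrite E irr.
have [q [p l u s _]] := two_routes sg con ab' erefl (esym dab).
apply: nc; exists (a :: q); split => //.
by rewrite /cycle rcons_path p l sym ab.
Qed.

Lemma child (T : finType) (e : rel T) : is_tree e ->
  forall r u w p, e u w -> e u p -> p != w -> dist e r p + 1 = dist e r u ->
  dist e r w = dist e r u + 1.
Proof.
move=> tr r u w p uw up pw dp; have [sg con nc] := tr; have [irr sym] := sg.
have h1 := dist_tri con r u w. have h2 := dist_tri con r w u.
have h3 := dist_edge con uw. have h4 := dist_edge con (w:=u) (u:=w).
rewrite sym uw in h4. have h5 := h4 isT.
case: (ltngtP (dist e r w) (dist e r u)) => H; last by exfalso; exact: bipartite tr r u w uw (esym H).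
- have dw : dist e r w = dist e r p by lia.
  have [q [pq l uq s al]] := two_routes sg con pw erefl dw.
  exfalso; apply: nc; exists (u :: p :: q); split.
  + by rewrite /= ltnS ltnW.
  + rewrite cons_uniq uq andbT; apply/negP => /(allP al) /=; lia.
  + by rewrite /cycle /= up rcons_path pq l sym uw.
- lia.
Qed.


Lemma ecc_ge (T : finType) (e : rel T) u v : dist e u v <= ecc e u.
Proof. exact: (leq_bigmax (F := fun x => dist e u x) v). Qed.

Lemma gen_minimal (T : finType) (e : rel T) : is_tree e ->
  forall r c z1 z2 z3,
  let d := diam e in
  let g := fun v => if v == r then c else if dist e r v == d then 1 else 0 in
  2 <= d -> 1 <= c -> c < d -> d <= c + 2 ->
  z1 != z2 -> z1 != z3 -> z2 != z3 ->
  dist e r z1 = d -> dist e r z2 = d -> dist e r z3 = d ->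
  (forall u, c < dist e r u < d -> exists z, (dist e r z == d) && e u z) ->
  (forall k, k < c -> exists wit, ((k == 0) || (k < dist e r wit)) /\
      forall z, dist e r z = d -> 1 < dist e wit z) ->
  minimal_dominating e g /\ d < cost g.
Proof.
move=> tr r c z1 z2 z3 d g d2 c1 cd dc n12 n13 n23 d1 d2' d3 Hcov Hwit.
have [sg con nc] := tr; have [irr sym] := sg.
have dsym := dist_sym sg con.
have nr : forall z, dist e r z = d -> (z == r) = false.
  move=> z dz; apply/negP => /eqP E; move: dz; rewrite E dist_refl //; lia.
have gZ : forall z, dist e r z = d -> g z = 1.
  by move=> z dz; rewrite /g nr // dz eqxx.
have gr : g r = c by rewrite /g eqxx.
split; last first.
  rewrite /cost (bigD1 r) //= (bigD1 z1) /=; last by rewrite nr.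
  rewrite (bigD1 z2) /=; last by rewrite nr // eq_sym n12.
  rewrite (bigD1 z3) /=; last by rewrite nr // eq_sym n13 eq_sym n23.
  rewrite gr !gZ //; lia.
apply/and3P; split.
- apply/forallP => v; rewrite /g; case: eqP => [->|_].
    have := ecc_ge e r z1; rewrite d1 => h; apply/andP; split; lia.
  case: eqP => [dv|_]; last by [].
  have := ecc_ge e v r; rewrite dsym dv => h; apply/andP; split; lia.
- apply/forallP => u; apply/existsP.
  case: (leqP (dist e r u) c) => H.
    by exists r; rewrite gr c1 dsym H.
  case: (eqVneq (dist e r u) d) => [du|ndu].
    exists u; rewrite gZ // dist_refl //.
  have [z /andP[/eqP dz uz]] : exists z, (dist e r z == d) && e u z.
    apply: Hcov; rewrite H /=; have := dist_le_diam e r u; rewrite -/d; lia.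
  exists z; rewrite gZ //=; exact: dist_edge.
- apply/forallP => v; apply/implyP => gv; apply/forallP => k.
  case: (eqVneq v r) => [vr|nvr].
    subst v. have kc : k < c by rewrite -gr.
    have [wit [Hk Hz]] := Hwit k kc.
    apply/negP => /forallP /(_ wit) /existsP [v' /andP[h1 h2]].
    move: h1 h2; case: (eqVneq v' r) => [->|nv'].
      rewrite dsym; move: Hk => /orP[/eqP->//|]; lia.
    rewrite /g (negbTE nv'); case: eqP => [dv'|]; last by [].
    have := Hz v' dv'; lia.
  have dv : dist e r v = d.
    move: gv; rewrite /g (negbTE nvr); by case: eqP.
  have k0 : nat_of_ord k = 0.
    have := ltn_ord k; have := gZ v dv; lia.
  apply/negP => /forallP /(_ v) /existsP [v' /andP[h1 h2]].
  move: h1 h2; case: (eqVneq v' v) => [->|nv']; first by rewrite k0.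
  rewrite /g; case: (eqVneq v' r) => [->|nv'r].
    rewrite dsym dv; lia.
  case: eqP => [dv'|]; last by [].
  move=> _ /(dist1 con) [E|E]; first by rewrite E eqxx in nv'.
  exact: (bipartite tr (r:=r) E (etrans dv (esym dv'))).
Qed.


Lemma gamma_ge (T : finType) (e : rel T) (g : T -> nat) :
  (forall v, g v <= diam e) -> minimal_dominating e g -> cost g <= Gamma_b e.
Proof.
move=> gle md.
pose F : {ffun T -> 'I_(diam e).+1} := [ffun v => inord (g v)].
have HF : (fun v => nat_of_ord (F v)) = g.
  apply: functional_extensionality => v; rewrite /F ffunE inordK //; exact: gle.
have := @leq_bigmax_cond _ (fun f : {ffun T -> 'I_(diam e).+1} =>
   minimal_dominating e (fun v => nat_of_ord (f v)))
  (fun f : {ffun T -> 'I_(diam e).+1} => cost (fun v => nat_of_ord (f v))) F.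
rewrite HF; move/(_ md); exact.
Qed.

Lemma gamma_big (T : finType) (e : rel T) : is_tree e -> 2 <= diam e ->
  forall r z1 z2 z3, z1 != z2 -> z1 != z3 -> z2 != z3 ->
  dist e r z1 = diam e -> dist e r z2 = diam e -> dist e r z3 = diam e ->
  diam e < Gamma_b e.
Proof.
move=> tr d2 r z1 z2 z3 n12 n13 n23 d1 d2' d3.
have [sg con nc] := tr; have [irr sym] := sg.
set d := diam e in d2 d1 d2' d3 *.
have fin : forall c, 1 <= c -> c < d -> d <= c + 2 ->
  (forall u, c < dist e r u < d -> exists z, (dist e r z == d) && e u z) ->
  (forall k, k < c -> exists wit, ((k == 0) || (k < dist e r wit)) /\
      forall z, dist e r z = d -> 1 < dist e wit z) -> d < Gamma_b e.
  move=> c c1 cd dc Hcov Hwit.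
  have [md cg] := gen_minimal tr (r:=r) d2 c1 cd dc n12 n13 n23 d1 d2' d3 Hcov Hwit.
  apply: leq_trans cg _; apply: gamma_ge md => v.
  case: ifP => _; first lia. case: ifP => _; lia.
case: (boolP [exists w, (dist e r w == d.-1) && [forall z, (dist e r z == d) ==> ~~ e w z]]).
  case/existsP => w /andP[/eqP dw /forallP Hw].
  apply: (fin d.-1); try lia.
  move=> k kc; exists w; split.
    by rewrite dw kc orbT.
  move=> z dz; rewrite ltnNge; apply/negP => /(dist1 con) [E|E].
    by move: dw; rewrite E dz; lia.
  by have := Hw z; rewrite dz eqxx E.
move=> /existsPn Hn.
have [p1 [_ dp1]] := dist_parent sg con (k := d.-1) (r := r) (u := z1) ltac:(lia).
have [p2 [_ dp2]] := dist_parent sg con (k := d.-2) (r := r) (u := p1) ltac:(lia).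
apply: (fin (maxn d.-2 1)); try lia.
  move=> u /andP[Hu1 Hu2]; have du : dist e r u = d.-1 by lia.
  have := Hn u; rewrite du eqxx /= => /forallPn [z]; rewrite negb_imply negbK.
  by move=> H; exists z.
move=> k kc; exists p2; split.
  rewrite dp2; apply/orP; lia.
move=> z dz; have := dist_tri con r p2 z; lia.
Qed.


Lemma near_endA (T : finType) (e : rel T) : is_tree e ->
  forall r a p x y, dist e r a = (diam e).-1 -> dist e r p = (diam e).-2 -> 2 <= diam e ->
  e a p -> e a x -> e x y -> x != p -> y != a -> False.
Proof.
move=> tr r a p x y da dp d2 ap ax xy xp ya.
have [sg con nc] := tr; have [irr sym] := sg.
have dx := child tr (r:=r) ax ap ltac:(by rewrite eq_sym) ltac:(lia).
have xa : e x a by rewrite sym.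
have dy := child tr (r:=r) xy xa (p:=a) ltac:(by rewrite eq_sym) ltac:(lia).
have := dist_le_diam e r y; lia.
Qed.

Lemma near_endB (T : finType) (e : rel T) : is_tree e -> diametrical e ->
  forall r a p q x y, dist e r a = (diam e).-1 -> dist e r p = (diam e).-2 -> 2 <= diam e ->
  dist e r q = diam e ->
  e a p -> e a x -> e a y -> x != y -> x != p -> y != p -> q != x -> q != y -> False.
Proof.
move=> tr dm r a p q x y da dp d2 dq ap ax ay xy xp yp qx qy.
have dx := child tr (r:=r) ax ap ltac:(by rewrite eq_sym) ltac:(lia).
have dy := child tr (r:=r) ay ap ltac:(by rewrite eq_sym) ltac:(lia).
have := gamma_big tr d2 qx qy xy dq ltac:(lia) ltac:(lia).
rewrite dm; lia.
Qed.

Lemma end_leaf (T : finType) (e : rel T) : is_tree e ->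
  forall r a p x, dist e r a = diam e -> e a p -> dist e r p + 1 = diam e ->
  e a x -> x != p -> False.
Proof.
move=> tr r a p x da ap dp ax xp.
have dx := child tr (r:=r) ax ap ltac:(by rewrite eq_sym) ltac:(lia).
have := dist_le_diam e r x; lia.
Qed.


Lemma path_reach (T : finType) (e : rel T) d (D : nat -> T) :
  (forall i, i < d -> e (D i) (D i.+1)) ->
  forall m j, j + m <= d -> reachk e m (D j) (D (j + m)).
Proof.
move=> ed; elim=> [|m IH] j H; first by rewrite addn0 reach_refl.
have := reach_trans (reach_edge (ed j ltac:(lia))) (IH j.+1 ltac:(lia)).
by rewrite add1n addSnnS.
Qed.

Lemma not_on (T : finType) (e : rel T) d (D : nat -> T) x i :
  protrudes e d D x i -> forall j, j <= d -> x != D j.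
Proof.
move=> [_ H _] j jd; apply/negP => /eqP E; apply: H; by exists j.
Qed.

Unset Implicit Arguments.
Theorem mainTheorem10 (T : finType) (e : rel T) (d : nat) (D : nat -> T) :
  is_tree e -> diametrical e -> diametral_path e d D ->
  forall i, i <= d ->
    ((limbA e d D i \/ limbB e d D i) -> 2 <= i /\ 2 <= d - i) /\
    (limbC e d D i -> 1 <= i /\ 1 <= d - i).
Proof.
move=> tr dm [dd d0d ed] i id.
have [sg con nc] := tr; have [irr sym] := sg.
have dsym := dist_sym sg con.
have dR : forall j, j <= d -> dist e (D d) (D j) = d - j.
  move=> j jd; rewrite dsym; apply/eqP; rewrite eqn_leq.
  have h1 : dist e (D j) (D d) <= d - j.
    apply: dist_min => //; have := @path_reach _ e d D ed (d - j) j ltac:(lia).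
    by rewrite subnKC.
  rewrite h1 /=.
  have h2 : dist e (D 0) (D j) <= j.
    apply: dist_min => //; exact: @path_reach _ e d D ed j 0 ltac:(lia).
  have := dist_tri con (D 0) (D j) (D d); lia.
have dL : forall j, j <= d -> dist e (D 0) (D j) = j.
  move=> j jd; apply/eqP; rewrite eqn_leq.
  have h2 : dist e (D 0) (D j) <= j.
    apply: dist_min => //; exact: @path_reach _ e d D ed j 0 ltac:(lia).
  rewrite h2 /=.
  have := dist_tri con (D 0) (D j) (D d); have := dR j jd; rewrite dsym; lia.
have endc : forall x, (i == 0) || (i == d) -> e (D i) x ->
    (forall j, j <= d -> x != D j) -> False.
  move=> x /orP[/eqP i0|/eqP id'] ix xn.
  - subst i. case: (posnP d) => [d00|dpos].
      have := dist_le_diam e (D 0) x; rewrite -dd d00 => h.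
      have E := dist0 con (ltac:(lia) : dist e (D 0) x = 0).
      by have := xn 0 (leq0n _); rewrite E eqxx.
    apply: (@end_leaf _ e tr (D d) (D 0) (D 1) x).
    + by rewrite dR // subn0.
    + exact: ed.
    + rewrite dR //; lia.
    + done.
    + exact: xn.
  - subst i. case: (posnP d) => [d00|dpos].
      have := dist_le_diam e (D 0) x; rewrite -dd d00 => h.
      have E := dist0 con (ltac:(lia) : dist e (D 0) x = 0).
      by have := xn 0 (leq0n _); rewrite E eqxx.
    apply: (@end_leaf _ e tr (D 0) (D d) (D d.-1) x).
    + by rewrite dL.
    + rewrite sym; have := ed d.-1 ltac:(lia); by rewrite prednK.
    + rewrite dL; lia.
    + done.
    + apply: xn; lia.
have getx : (limbA e d D i \/ limbB e d D i) \/ limbC e d D i ->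
    exists x, e (D i) x /\ forall j, j <= d -> x != D j.
  case=> [[[x [y [[_ ix _ _] H]]]|[x [y [[_ ix _] H]]]]|[x [ix H]]];
    exists x; split => //; apply: (@not_on _ e d D x i); apply/H; by [left|].
case: (boolP ((i == 0) || (i == d))) => [He|Hne].
  split => H; exfalso.
    have [x [ix xn]] := getx (or_introl H); exact: endc x He ix xn.
  have [x [ix xn]] := getx (or_intror H); exact: endc x He ix xn.
move: Hne; rewrite negb_or => /andP[/eqP i0 /eqP idd].
split; last by move=> _; lia.
move=> HAB.
have d2 : 2 <= diam e by lia.
case: (eqVneq i 1) => [i1|ni1].
  subst i; exfalso.
  have da : dist e (D d) (D 1) = (diam e).-1 by rewrite dR //; lia.
  have dp : dist e (D d) (D 2) = (diam e).-2 by rewrite dR //; lia.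
  have ap : e (D 1) (D 2) by apply: ed; lia.
  case: HAB => [[x [y [[xy ix xy' _] H]]]|[x [y [[xy ix iy] H]]]].
    have xn := not_on (proj2 (H x) (or_introl erefl)).
    have yn := not_on (proj2 (H y) (or_intror erefl)).
    exact: (near_endA tr da dp d2 ap ix xy' (xn 2 ltac:(lia)) (yn 1 ltac:(lia))).
  have xn := not_on (proj2 (H x) (or_introl erefl)).
  have yn := not_on (proj2 (H y) (or_intror erefl)).
  have dq : dist e (D d) (D 0) = diam e by rewrite dR //; lia.
  apply: (near_endB tr dm da dp d2 dq ap ix iy xy (xn 2 ltac:(lia)) (yn 2 ltac:(lia))).
    by rewrite eq_sym; apply: xn.
  by rewrite eq_sym; apply: yn.
case: (eqVneq i d.-1) => [idm|nidm]; last by lia.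
exfalso; subst i.
have da : dist e (D 0) (D d.-1) = (diam e).-1 by rewrite dL; lia.
have dp : dist e (D 0) (D d.-2) = (diam e).-2 by rewrite dL; lia.
have ap : e (D d.-1) (D d.-2).
  rewrite sym; have := ed d.-2 ltac:(lia); have -> : d.-2.+1 = d.-1 by lia. done.
case: HAB => [[x [y [[xy ix xy' _] H]]]|[x [y [[xy ix iy] H]]]].
  have xn := not_on (proj2 (H x) (or_introl erefl)).
  have yn := not_on (proj2 (H y) (or_intror erefl)).
  exact: (near_endA tr da dp d2 ap ix xy' (xn d.-2 ltac:(lia)) (yn d.-1 ltac:(lia))).
have xn := not_on (proj2 (H x) (or_introl erefl)).
have yn := not_on (proj2 (H y) (or_intror erefl)).
have dq : dist e (D 0) (D d) = diam e by rewrite dL //; lia.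
apply: (near_endB tr dm da dp d2 dq ap ix iy xy (xn d.-2 ltac:(lia)) (yn d.-2 ltac:(lia))).
  by rewrite eq_sym; apply: xn.
by rewrite eq_sym; apply: yn.
Qed.
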